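(* Let $m_0\in\mathbb N$ be such that for every $m\ge m_0$, every graph on $m+1$ vertices that has minimum degree at least $\lfloor 2m/3\rfloor$ and a vertex of degree $m$ contains every tree with $m$ edges as a subgraph. Let $k\ge m_0$, let $G$ be a graph on $n$ vertices with $n\ge k+1$, set $a:=n-k$, and let $S$ be the set of vertices of $G$ of degree at most $\frac{2k}{3}+a$, with $b:=|S|$. If some vertex $v$ of $G$ has degree at least $k+b$, then $G$ contains every tree with $k$ edges as a subgraph.
   Context: ''Contains $T$ as a subgraph'' means there is an injective map $V(T)\to V(G)$ sending edges of $T$ to edges of $G$. *)

(* Defs.v *)
From mathcomp Require Import all_boot.
Set Implicit Arguments. Unset Strict Implicit. Unset Printing Implicit Defensive.

Definition simple_graph (V : finType) (e : rel V) : Prop :=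
  symmetric e /\ irreflexive e.

Definition deg (V : finType) (e : rel V) (x : V) : nat := #|[set y | e x y]|.

Definition edges (V : finType) (e : rel V) : {set {set V}} :=
  [set E : {set V} | [exists x, exists y, e x y && (E == [set x; y])]].

Definition nedges (V : finType) (e : rel V) : nat := #|edges e|.

Definition connected_graph (V : finType) (e : rel V) : Prop :=
  forall x y : V, connect e x y.

Definition acyclic (V : finType) (e : rel V) : Prop :=
  ~ (exists c : seq V, [/\ 3 <= size c, uniq c & cycle e c]).

Definition is_tree (V : finType) (e : rel V) : Prop :=
  [/\ simple_graph e, 0 < #|V|, connected_graph e & acyclic e].

Definition contains (V : finType) (e : rel V) (T : finType) (eT : rel T) : Prop :=
  exists f : T -> V, injective f /\ forall x y, eT x y -> e (f x) (f y).

Definition contains_all_trees (V : finType) (e : rel V) (k : nat) : Prop :=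
  forall (T : finType) (eT : rel T), is_tree eT -> nedges eT = k -> contains e eT.

(* Main.v *)
Require Import Defs.
From mathcomp Require Import all_boot zify.

Lemma pick_sub (T : finType) (A : {set T}) k : k <= #|A| ->
  exists B : {set T}, B \subset A /\ #|B| = k.
Proof.
move=> hk; exists [set x in take k (enum A)]; split.
  by apply/subsetP=> x; rewrite inE => /mem_take; rewrite mem_enum.
rewrite cardsE; move/card_uniqP: (take_uniq k (enum_uniq (mem A))) => ->.
rewrite size_take -cardE; case: ifP => // /negbT; rewrite -leqNgt => h; apply/eqP; rewrite eqn_leq h; exact: hk.
Qed.

Lemma card_val (T : finType) (W : {set T}) (P : pred T) :
  #|[set y : {x | x \in W} | P (val y)]| = #|W :&: [set x | P x]|.
Proof.
rewrite -(card_imset _ val_inj); apply: eq_card => x.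
rewrite !inE; apply/imsetP/andP.
  by case=> y; rewrite inE => Py ->; split => //; exact: valP.
case=> xW Px; exists (exist _ x xW) => //; by rewrite inE.
Qed.

Theorem mainTheorem5 (m0 : nat)
  (Hm0 : forall m : nat, m0 <= m ->
     forall (W : finType) (eW : rel W), simple_graph eW -> #|W| = m.+1 ->
       (forall w : W, (2 * m) %/ 3 <= deg eW w) ->
       (exists w : W, deg eW w = m) ->
       contains_all_trees eW m)
  (k : nat) (Hk : m0 <= k)
  (V : finType) (e : rel V) (He : simple_graph e)
  (n : nat) (Hn : #|V| = n) (Hnk : k + 1 <= n) :
  let a := n - k in
  let S := [set x : V | 3 * deg e x <= 2 * k + 3 * a] in
  let b := #|S| in
  (exists v : V, k + b <= deg e v) ->
  contains_all_trees e k.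
Proof.
move=> a S b [v hv].
case: He => Hsym Hirr.
set N := [set y | e v y].
have hA : k <= #|N :\: S|.
  rewrite cardsD.
  have : #|N :&: S| <= b by apply: subset_leq_card; apply: subsetIr.
  rewrite /deg in hv; rewrite -/N in hv; lia.
have [B [hBA hBk]] := @pick_sub _ _ _ hA.
have hBN : B \subset N by apply: subset_trans hBA (subsetDl _ _).
have vB : v \notin B.
  apply/negP => /(subsetP hBN); by rewrite inE Hirr.
set W := v |: B.
have hW : #|W| = k.+1 by rewrite cardsU1 vB hBk.
have hCW : #|~: W| = n - k.+1 by have := cardsC W; rewrite hW Hn; lia.
have key : forall x, x \in W -> deg e x <= #|W :&: [set y | e x y]| + (n - k.+1).
  move=> x xW; rewrite /deg -hCW.
  apply: leq_trans (leq_card_setU _ _).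
  apply: subset_leq_card; apply/subsetP => y yN.
  by move: yN; rewrite !inE => ->; rewrite andbT orbN.
pose WT := {x : V | x \in W}.
pose eW := fun x y : WT => e (val x) (val y).
have degW : forall w : WT, deg eW w = #|W :&: [set y | e (val w) y]|.
  move=> w; rewrite /deg -card_val; apply: eq_card => y; by rewrite !inE.
have H : contains_all_trees eW k.
  apply: Hm0 => //.
- by split; [move=> x y; rewrite /eW Hsym | move=> x; rewrite /eW Hirr].
- by rewrite card_sig -hW; apply: eq_card.
- move=> w; rewrite degW.
  have := key _ (valP w).
  case/setU1P: (valP w) => hw.
    have : #|B| <= #|W :&: [set y | e (val w) y]|.
      apply: subset_leq_card; apply/subsetP => y yB.
      rewrite !inE hw; move/subsetP: hBN => /(_ y yB); rewrite inE => ->.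
      by rewrite yB orbT.
    rewrite hBk => h _; rewrite -ltnS ltn_divLR //; move: h; move: #|_| => X; lia.
  have : val w \notin S.
    by move/subsetP: hBA => /(_ _ hw); rewrite inE => /andP [].
  rewrite inE -ltnNge /a => h1 h2; rewrite -ltnS ltn_divLR //; move: h1 h2; move: (deg _ _) #|_| => D X; lia.
- exists (exist _ v (setU11 v B)); rewrite degW /=.
  rewrite -hBk; apply: eq_card => y; rewrite !inE.
  case: eqP => [->|_]; first by rewrite Hirr; apply/esym/negbTE.
  rewrite /=; apply/idP/idP => [/andP [] //|yB].
  by rewrite yB /=; move/subsetP: hBN => /(_ y yB); rewrite inE.
move=> T eT hT hn.
have [f [finj fe]] := H T eT hT hn.
exists (fun x => val (f x)); split; first by apply: inj_comp finj; exact: val_inj.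
by move=> x y /fe.
Qed.
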